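(* Let $k\geq2$ and let $L=(l_1,\dots,l_k)$ be generic and reduced positive integers with sum $n$. Fix $i\in[k]$, let $d=\gcd(n,l_i)$ and $q=n/d$. For $v\in\mathbb{Z}_n$ let ${}_vE_i^q$ be the closed edge-path starting at $v$ and making $q$ consecutive steps of type $i$ (through $v,v+l_i,\dots,v+ql_i=v$). Then all the cycles ${}_vE_i^q$, $v\in\mathbb{Z}_n$, are homologous in $Tonn^{n,k}(L)$.
   Context: $L$ is generic if for all $I,J\subseteq[k]$, $\sum_{i\in I}l_i=\sum_{j\in J}l_j$ implies $I=J$; reduced if $\gcd(l_1,\dots,l_k)=1$. The generalized tonnetz $Tonn^{n,k}(L)$ is the simplicial complex on vertex set $\mathbb{Z}_n$ whose maximal simplices are $\Delta(x;\sigma)=\{x,\,x+l_{\sigma(1)},\dots,x+l_{\sigma(1)}+\dots+l_{\sigma(k-1)}\}$ for $x\in\mathbb{Z}_n$, $\sigma\in S_k$. A step of type $i$ from a vertex $y$ is the oriented 1-simplex from $y$ to $y+l_i$. *)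

(* Defs.v *)
From HB Require Import structures.
From mathcomp Require Import all_boot all_order all_algebra all_fingroup.
Set Implicit Arguments. Unset Strict Implicit. Unset Printing Implicit Defensive.
Import GRing.Theory.
Local Open Scope ring_scope.

Definition generic (k : nat) (l : 'I_k -> nat) : Prop :=
  forall I J : {set 'I_k},
    (\sum_(i in I) l i)%N = (\sum_(j in J) l j)%N -> I = J.

Definition reduced (k : nat) (l : 'I_k -> nat) : Prop :=
  \big[gcdn/0%N]_(i < k) l i = 1%N.

(* Maximal simplex Delta(x; sigma) of Tonn^{n,k}(L), vertices in Z_n
   (n >= 2 is assumed wherever this is used, so 'Z_n is Z/nZ). *)
Definition max_simplex (n k : nat) (l : 'I_k -> nat) (x : 'Z_n) (s : 'S_k)
  : {set 'Z_n} :=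
  [set x + ((\sum_(t < k | (t < j)%N) l (s t))%N)%:R | j : 'I_k].

Definition is_face (n k : nat) (l : 'I_k -> nat) (S : {set 'Z_n}) : Prop :=
  exists (x : 'Z_n) (s : 'S_k), S \subset max_simplex l x s.

(* Integral simplicial 1-chains: the oriented edge [a,b] is encoded as the
   antisymmetric function e_(a,b) - e_(b,a) on ordered pairs. *)
Definition chain1 (n : nat) := 'Z_n * 'Z_n -> int.

Definition edge (n : nat) (a b : 'Z_n) : chain1 n :=
  fun p => ((p == (a, b)) : int) - ((p == (b, a)) : int).

Definition bd2 (n : nat) (a b c : 'Z_n) : chain1 n :=
  fun p => edge a b p + edge b c p + edge c a p.

Definition homologous (n k : nat) (l : 'I_k -> nat) (z1 z2 : chain1 n) : Prop :=
  exists s : seq (int * ('Z_n * 'Z_n * 'Z_n)),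
    (forall t, t \in s -> is_face l [set t.2.1.1; t.2.1.2; t.2.2]) /\
    forall p, z1 p - z2 p =
      \sum_(t <- s) t.1 * bd2 t.2.1.1 t.2.1.2 t.2.2 p.

Definition Ecycle (n k : nat) (l : 'I_k -> nat) (i : 'I_k) (v : 'Z_n)
  : chain1 n :=
  let q := (n %/ gcdn n (l i))%N in
  fun p => \sum_(j < q)
    edge (v + (j * l i)%N%:R) (v + (j.+1 * l i)%N%:R) p.

(* Main.v *)
Require Import Defs.
From HB Require Import structures.
From mathcomp Require Import all_boot all_order all_algebra all_fingroup.
From mathcomp Require Import ring.

Section Aux.
Local Open Scope ring_scope.
Import GRing.Theory.

Lemma hom_refl k (l : 'I_k -> nat) n (z : chain1 n) : homologous l z z.
Proof. exists [::]; split => // p; by rewrite subrr big_nil. Qed.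

Lemma hom_sym k (l : 'I_k -> nat) n (z1 z2 : chain1 n) :
  homologous l z1 z2 -> homologous l z2 z1.
Proof.
case=> s [hs he]; exists [seq (- t.1, t.2) | t <- s]; split.
- by move=> t /mapP [u us ->]; exact: (hs u us).
- move=> p; rewrite big_map -opprB he -sumrN; apply: eq_bigr => t _ /=.
  by rewrite mulNr.
Qed.

Lemma hom_trans k (l : 'I_k -> nat) n (z1 z2 z3 : chain1 n) :
  homologous l z1 z2 -> homologous l z2 z3 -> homologous l z1 z3.
Proof.
case=> s1 [h1 e1] [s2 [h2 e2]]; exists (s1 ++ s2); split.
- by move=> t; rewrite mem_cat => /orP [] ?; [apply: h1|apply: h2].
- by move=> p; rewrite big_cat /= -e1 -e2 addrA subrK.
Qed.

Lemma tele (f : nat -> int) q : \sum_(m < q) (f m - f m.+1) = f 0%N - f q.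
Proof.
elim: q => [|q IH]; first by rewrite big_ord0 subrr.
by rewrite big_ord_recr /= IH addrA subrK.
Qed.

Lemma sum_lt1 K (F : 'I_K.+1 -> nat) :
  (\sum_(t < K.+1 | (t < 1)%N) F t)%N = F ord0.
Proof.
rewrite big_mkcond big_ord_recl /= big1 ?addn0 //.
Qed.

Lemma sum_lt2 K (F : 'I_K.+2 -> nat) :
  (\sum_(t < K.+2 | (t < 2)%N) F t)%N = (F ord0 + F (lift ord0 ord0))%N.
Proof.
rewrite big_mkcond big_ord_recl /= big_ord_recl /= big1 ?addn0 //.
Qed.


Lemma sum2 (l : 'I_2 -> nat) (i j : 'I_2) : i != j ->
  (l i + l j = \sum_(t < 2) l t)%N.
Proof.
move=> ij; rewrite (bigD1 i) //= (big_pred1 j) //.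
move=> t /=; move: t i j ij.
by move=> [[|[|?]] ?] [[|[|?]] ?] [[|[|?]] ?].
Qed.

Lemma face3 k' (l : 'I_k'.+2 -> nat) n (hn : n = (\sum_(t<k'.+2) l t)%N)
  (n2 : (1 < n)%N) (x : 'Z_n) (i j : 'I_k'.+2) : i != j ->
  is_face l [set x; x + (l i)%:R; x + (l i)%:R + (l j)%:R].
Proof.
move=> ij.
pose j' := tperm ord0 i j.
have j'0 : j' != ord0.
  by rewrite /j' -(inj_eq (@perm_inj _ (tperm ord0 i))) tpermK tpermL eq_sym.
pose s := (tperm (lift ord0 ord0) j' * tperm ord0 i)%g.
have s0 : s ord0 = i.
  by rewrite permM (@tpermD _ (lift ord0 ord0) j' ord0) // tpermL.
have s1 : s (lift ord0 ord0) = j by rewrite permM tpermL tpermK.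
exists x, s; apply/subsetP => z; rewrite !inE.
move=> /orP [/orP [] | ] /eqP -> ; apply/imsetP.
- by exists ord0 => //; rewrite big1 ?addr0.
- by exists (lift ord0 ord0) => //=; rewrite sum_lt1 s0.
clearbody s j'; move: l hn x i j ij j' j'0 s s0 s1.
case: k' => [|k'] l hn x i j ij j' j'0 s s0 s1.
- exists ord0 => //; rewrite big1 // addr0 -addrA -natrD sum2 // -hn.
  by rewrite pchar_Zp // addr0.
- by exists (lift ord0 (lift ord0 ord0)) => //=; rewrite sum_lt2 s0 s1 natrD addrA.
Qed.


Lemma core k' (l : 'I_k'.+2 -> nat) n (hn : n = (\sum_(t<k'.+2) l t)%N)
  (n2 : (1 < n)%N) (i j : 'I_k'.+2) (v : 'Z_n) : i != j ->
  homologous l (Ecycle l i v) (Ecycle l i (v + (l j)%:R)).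
Proof.
move=> ij.
set q := (n %/ gcdn n (l i))%N.
pose y (m : nat) : 'Z_n := v + (m * l i)%N%:R.
pose a : 'Z_n := (l i)%:R.
pose b : 'Z_n := (l j)%:R.
exists ([seq (1, (y m, y m + a, y m + a + b)) | m : 'I_q <- index_enum 'I_q] ++
        [seq (-1, (y m, y m + b, y m + b + a)) | m : 'I_q <- index_enum 'I_q]).
split.
- move=> t; rewrite mem_cat => /orP [] /mapP [m _ ->] /=.
    exact: face3.
  by apply: face3; rewrite // eq_sym.
move=> p; rewrite big_cat !big_map /=.
have ySa m : y m.+1 = y m + a by rewrite /y /a mulSn natrD; ring.
have hq : y q = y 0%N.
  rewrite /y /q mul0n divn_mulAC ?dvdn_gcdl // -muln_divA ?dvdn_gcdr //.
  by rewrite natrM pchar_Zp // mul0r.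
have E1 : Ecycle l i v p = \sum_(m < q) edge (y m) (y m + a) p.
  by apply: eq_bigr => m _; rewrite -ySa.
have E2 : Ecycle l i (v + b) p = \sum_(m < q) edge (y m + b) (y m + b + a) p.
  by apply: eq_bigr => m _; rewrite /y /a /b mulSn natrD; congr (edge _ _ p); ring.
rewrite E1 E2 -sumrB.
transitivity (\sum_(m < q) ((bd2 (y m) (y m + a) (y m + a + b) p -
     bd2 (y m) (y m + b) (y m + b + a) p) +
     (edge (y m) (y m + b) p - edge (y m.+1) (y m.+1 + b) p))).
  apply: eq_bigr => m _; rewrite ySa (addrAC (y m) a b) /bd2; ring.
rewrite big_split /= (tele (fun m => edge (y m) (y m + b) p)) hq subrr addr0.
rewrite sumrB -sumrN; congr (_ + _).
- by apply: eq_bigr => m _; rewrite mul1r.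
- by apply: eq_bigr => m _; rewrite mulN1r.
Qed.

Lemma main_aux k' (l : 'I_k'.+2 -> nat) (hred : reduced l)
  n (hn : n = (\sum_(t < k'.+2) l t)%N) (i : 'I_k'.+2) (n2 : (1 < n)%N) :
  forall v w : 'Z_n, homologous l (Ecycle l i v) (Ecycle l i w).
Proof.
pose S (x : 'Z_n) := forall v, homologous l (Ecycle l i v) (Ecycle l i (v + x)).
have S0 : S 0 by move=> v; rewrite addr0; apply: hom_refl.
have SD x y : S x -> S y -> S (x + y).
  move=> Sx Sy v; apply: hom_trans (Sx v) _; rewrite addrA; exact: Sy.
have SN x : S x -> S (- x).
  move=> Sx v; apply: hom_sym; have := Sx (v - x); by rewrite subrK.
have SMn x m : S x -> S (x *+ m).
  move=> Sx; elim: m => [|m IH]; first by rewrite mulr0n.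
  by rewrite mulrS; apply: SD.
have Sl j : j != i -> S (l j)%:R by move=> ji v; apply: core; rewrite // eq_sym.
have Sli : S (l i)%:R.
  have h0 : ((\sum_(t < k'.+2) l t)%N%:R : 'Z_n) = 0 by rewrite -hn pchar_Zp.
  rewrite (bigD1 i) //= natrD natr_sum in h0.
  move/eqP: h0; rewrite addr_eq0 => /eqP ->.
  apply: SN; apply: (big_ind S S0 SD) => j ji; exact: Sl.
have Sall j : S (l j)%:R by case: (eqVneq j i) => [->|ji]; [exact: Sli | exact: Sl].
have Sg a b : S a%:R -> S b%:R -> S (gcdn a b)%:R.
  move=> Sa Sb; case: (posnP a) => [->|a0]; first by rewrite gcd0n.
  case: (Bezoutl b a0) => c _ /dvdnP [e he].
  have : ((gcdn a b)%:R + (c * b)%:R) = (e * a)%:R :> 'Z_n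
    by rewrite -natrD he.
  move/(congr1 (fun x => x - (c * b)%:R)); rewrite addrK => ->.
  apply: SD; last apply: SN.
    by rewrite mulnC natrM mulr_natr; apply: SMn.
  by rewrite mulnC natrM mulr_natr; apply: SMn.
have S1 : S (1%N)%:R.
  rewrite -hred; apply: (@big_ind nat (fun m => S m%:R)) => [|x y|j _]; [exact: S0 | exact: Sg | exact: Sall].
move=> v w.
have := SMn _ (w - v) S1 v.
rewrite mulr1n natr_Zp.
have -> : (v + (w - v)) = w by rewrite addrC subrK.
done.
Qed.

End Aux.

From mathcomp Require Import zify.

Theorem proposition4p3 (k : nat) (hk : (2 <= k)%N) (l : 'I_k -> nat)
  (hpos : forall i, (0 < l i)%N) (hgen : generic l) (hred : reduced l)
  (n : nat) (hn : n = (\sum_(i < k) l i)%N) (i : 'I_k) :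
  forall v w : 'Z_n, homologous l (Ecycle l i v) (Ecycle l i w).
Proof.
case: k hk l hpos hgen hred hn i => [|[|k']] // _ l hpos _ hred hn i.
apply: main_aux => //.
rewrite hn big_ord_recl big_ord_recl /=.
have := hpos ord0; have := hpos (lift ord0 ord0); lia.
Qed.
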